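(* Let $p$ be any of the following patterns, or any pattern in the same symmetry class as one of them: $(123,\{0\},\{0,1,2\})$, $(123,\{0\},\{0,1,3\})$, $(123,\{0\},\{0,2,3\})$, $(123,\{0\},\{1,2,3\})$, $(123,\{1\},\{0,1,2\})$, $(123,\{1\},\{0,1,3\})$, $(123,\{1\},\{0,2,3\})$, $(123,\{1\},\{1,2,3\})$, $(132,\{0\},\{0,1,2\})$, $(132,\{0\},\{0,1,3\})$, $(132,\{0\},\{0,2,3\})$, $(132,\{0\},\{1,2,3\})$, $(132,\{1\},\{0,1,2\})$, $(132,\{1\},\{0,1,3\})$, $(132,\{1\},\{0,2,3\})$, $(132,\{1\},\{1,2,3\})$, $(132,\{2\},\{0,1,2\})$, $(132,\{2\},\{0,1,3\})$, $(132,\{2\},\{0,2,3\})$, $(132,\{2\},\{1,2,3\})$, $(132,\{0,1,2\},\{3\})$, $(132,\{3\},\{0,1,3\})$, $(132,\{3\},\{0,2,3\})$, $(132,\{3\},\{1,2,3\})$. Then for all $n\ge3$, $a_n(p)=n!-\frac{(n-1)!}{2}$.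
   Context: For $n\ge1$, $\mathcal S_n$ is the set of permutations $\pi=\pi_1\cdots\pi_n$ of $[n]$. A bi-vincular pattern of length $k$ is a triple $p=(\sigma,X,Y)$ with $\sigma\in\mathcal S_k$ and $X,Y\subseteq\{0,1,\dots,k\}$. A permutation $\pi\in\mathcal S_n$ contains $p$ if there are indices $1\le i_1<\dots<i_k\le n$ such that $(\pi_{i_1},\dots,\pi_{i_k})$ is order-isomorphic to $\sigma$ and, letting $j_1<\dots<j_k$ be the values $\pi_{i_1},\dots,\pi_{i_k}$ sorted increasingly and setting $i_0=j_0=0$, $i_{k+1}=j_{k+1}=n+1$, one has $i_{x+1}=i_x+1$ for all $x\in X$ and $j_{y+1}=j_y+1$ for all $y\in Y$. Otherwise $\pi$ avoids $p$; $a_n(p)$ is the number of $\pi\in\mathcal S_n$ avoiding $p$. Symmetries: $p^{i}=(\sigma^{-1},Y,X)$, $p^{r}=(\sigma^{r},\{k-x:x\in X\},Y)$, $p^{c}=(\sigma^{c},X,\{k-y:y\in Y\})$ with $\sigma^r_j=\sigma_{k+1-j}$, $\sigma^c_j=k+1-\sigma_j$; the symmetry class of $p$ consists of all patterns obtained from $p$ by finitely many applications of these maps. *)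

(* Defs.v *)
From HB Require Import structures.
From mathcomp Require Import all_boot all_order all_algebra all_fingroup.
Set Implicit Arguments.
Unset Strict Implicit.
Unset Printing Implicit Defensive.

(* Bi-vincular patterns of length k: (sigma, X, Y), sigma in S_k,
   X, Y subsets of {0,...,k} (represented as {set 'I_k.+1}).
   Permutations of [n] are 'S_n acting on 'I_n = {0,...,n-1}; position i
   (0-based) corresponds to position i+1 in the paper, value v to v+1. *)
Record bvpat (k : nat) := BVPat {
  bv_sigma : 'S_k;
  bv_X : {set 'I_k.+1};
  bv_Y : {set 'I_k.+1}
}.

(* Extended sequence: s = [i_1; ...; i_k] (1-based), ext n s x = i_x with
   i_0 = 0 and i_{k+1} = n+1. *)
Definition ext (n : nat) (s : seq nat) (x : nat) : nat := nth n.+1 (0 :: s) x.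

Definition contains (n k : nat) (pi : 'S_n) (p : bvpat k) : bool :=
  [exists I : {ffun 'I_k -> 'I_n},
    let ps := [seq (I t : nat).+1 | t <- enum 'I_k] in
    let vs := sort leq [seq (pi (I t) : nat).+1 | t <- enum 'I_k] in
    [&& [forall s : 'I_k, forall t : 'I_k, (s < t) ==> (I s < I t)],
        [forall s : 'I_k, forall t : 'I_k,
           (pi (I s) < pi (I t)) == (bv_sigma p s < bv_sigma p t)],
        [forall x : 'I_k.+1, (x \in bv_X p) ==> (ext n ps x.+1 == (ext n ps x).+1)] &
        [forall y : 'I_k.+1, (y \in bv_Y p) ==> (ext n vs y.+1 == (ext n vs y).+1)]]].

Definition avoid_count (n k : nat) (p : bvpat k) : nat :=
  #|[set pi : 'S_n | ~~ contains pi p]|.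

Definition rev_perm (k : nat) : 'S_k := perm (@rev_ord_inj k).

Definition pat_inv k (p : bvpat k) : bvpat k :=
  BVPat (bv_sigma p)^-1 (bv_Y p) (bv_X p).
(* sigma^r_j = sigma_{k+1-j};  X |-> {k - x} *)
Definition pat_rev k (p : bvpat k) : bvpat k :=
  BVPat (rev_perm k * bv_sigma p)%g [set rev_ord x | x in bv_X p] (bv_Y p).
(* sigma^c_j = k+1-sigma_j;  Y |-> {k - y} *)
Definition pat_comp k (p : bvpat k) : bvpat k :=
  BVPat (bv_sigma p * rev_perm k)%g (bv_X p) [set rev_ord y | y in bv_Y p].

Inductive sym_class k (p : bvpat k) : bvpat k -> Prop :=
| sym_refl : sym_class p p
| sym_inv q : sym_class p q -> sym_class p (pat_inv q)
| sym_rev q : sym_class p q -> sym_class p (pat_rev q)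
| sym_comp q : sym_class p q -> sym_class p (pat_comp q).

Definition s3 (l : seq nat) : {set 'I_4} := [set x : 'I_4 | val x \in l].
Definition p123 : 'S_3 := 1%g.
Definition p132 : 'S_3 := tperm (inord 1) (inord 2).

Definition base_patterns : seq (bvpat 3) := [::
  BVPat p123 (s3 [::0]) (s3 [::0;1;2]);
  BVPat p123 (s3 [::0]) (s3 [::0;1;3]);
  BVPat p123 (s3 [::0]) (s3 [::0;2;3]);
  BVPat p123 (s3 [::0]) (s3 [::1;2;3]);
  BVPat p123 (s3 [::1]) (s3 [::0;1;2]);
  BVPat p123 (s3 [::1]) (s3 [::0;1;3]);
  BVPat p123 (s3 [::1]) (s3 [::0;2;3]);
  BVPat p123 (s3 [::1]) (s3 [::1;2;3]);
  BVPat p132 (s3 [::0]) (s3 [::0;1;2]);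
  BVPat p132 (s3 [::0]) (s3 [::0;1;3]);
  BVPat p132 (s3 [::0]) (s3 [::0;2;3]);
  BVPat p132 (s3 [::0]) (s3 [::1;2;3]);
  BVPat p132 (s3 [::1]) (s3 [::0;1;2]);
  BVPat p132 (s3 [::1]) (s3 [::0;1;3]);
  BVPat p132 (s3 [::1]) (s3 [::0;2;3]);
  BVPat p132 (s3 [::1]) (s3 [::1;2;3]);
  BVPat p132 (s3 [::2]) (s3 [::0;1;2]);
  BVPat p132 (s3 [::2]) (s3 [::0;1;3]);
  BVPat p132 (s3 [::2]) (s3 [::0;2;3]);
  BVPat p132 (s3 [::2]) (s3 [::1;2;3]);
  BVPat p132 (s3 [::0;1;2]) (s3 [::3]);
  BVPat p132 (s3 [::3]) (s3 [::0;1;3]);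
  BVPat p132 (s3 [::3]) (s3 [::0;2;3]);
  BVPat p132 (s3 [::3]) (s3 [::1;2;3])
].

Definition listed (p : bvpat 3) : Prop :=
  exists2 i, i < size base_patterns & p = nth (BVPat 1%g set0 set0) base_patterns i.

(* Main.v *)
Require Import Defs.
From mathcomp Require Import all_boot all_order all_algebra all_fingroup.
From mathcomp Require Import zify.
Import GRing.Theory.

Definition i0 : 'I_3 := @Ordinal 3 0 isT.
Definition i1 : 'I_3 := @Ordinal 3 1 isT.
Definition i2 : 'I_3 := @Ordinal 3 2 isT.

Lemma ord3P (t : 'I_3) : t = i0 \/ t = i1 \/ t = i2.
Proof.
case: t => [[|[|[|m]]] Hm].
- by left; apply: val_inj.
- by right; left; apply: val_inj.
- by right; right; apply: val_inj.
- by [].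
Qed.

Lemma enum3 : enum 'I_3 = [:: i0; i1; i2].
Proof. by apply: (inj_map val_inj); rewrite val_enum_ord. Qed.

Definition cond4v (n a b c m : nat) : bool :=
  match m with 0 => a == 0 | 1 => b == a.+1 | 2 => c == b.+1 | _ => c.+1 == n end.
Definition cond4 n (f : 'I_3 -> 'I_n) (x : 'I_4) : bool :=
  cond4v n (f i0) (f i1) (f i2) x.
Definition inc {n} (f : 'I_3 -> 'I_n) : bool := (f i0 < f i1) && (f i1 < f i2).

Definition Occ {n} (pi : 'S_n) (p : bvpat 3) (P V : 'I_3 -> 'I_n) : Prop :=
  [/\ inc P, inc V, (forall t, pi (P t) = V (bv_sigma p t)),
      (forall x, x \in bv_X p -> cond4 n P x) &
      (forall y, y \in bv_Y p -> cond4 n V y)].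

Lemma inc_lt {n} {f : 'I_3 -> 'I_n} : inc f -> forall s t : 'I_3, (s < t) = (f s < f t).
Proof.
rewrite /inc => /andP[h1 h2] s t.
by case: (ord3P s) => [->|[->|->]]; case: (ord3P t) => [->|[->|->]] /=; lia.
Qed.

Lemma cond_ext n (f : 'I_3 -> 'I_n) (x : 'I_4) :
  (ext n [seq (f t : nat).+1 | t <- enum 'I_3] x.+1 ==
     (ext n [seq (f t : nat).+1 | t <- enum 'I_3] x).+1) = cond4 n f x.
Proof.
rewrite enum3 /ext /cond4 /=.
case: x => [[|[|[|[|m]]]] Hm] //=; try by rewrite eqSS.
Qed.

Lemma perm_enum3 (s : 'S_3) : perm_eq (map s (enum 'I_3)) (enum 'I_3).
Proof.
apply: uniq_perm; first by rewrite (map_inj_uniq (@perm_inj _ s)) enum_uniq.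
  exact: enum_uniq.
move=> x; rewrite mem_enum; apply/mapP; exists (s^-1 x)%g; rewrite ?mem_enum //.
by rewrite permKV.
Qed.

Lemma sortV {n} (s : 'S_3) (V : 'I_3 -> 'I_n) : inc V ->
  sort leq [seq (V (s t) : nat).+1 | t <- enum 'I_3] = [seq (V t : nat).+1 | t <- enum 'I_3].
Proof.
move=> hV; apply: (sorted_eq leq_trans anti_leq).
- exact: (sort_sorted leq_total).
- move: hV; rewrite /inc enum3 /= => /andP[h1 h2]; lia.
rewrite perm_sort (map_comp (fun t => (V t : nat).+1) s).
exact: perm_map (perm_enum3 s).
Qed.

Lemma containsP n (pi : 'S_n) (p : bvpat 3) :
  contains pi p <-> exists P V, Occ pi p P V.
Proof.
split.
- move/existsP=> [I /and4P [H1 H2 H3 H4]].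
  set s := bv_sigma p.
  have hiso : forall a b, (pi (I a) < pi (I b)) = (s a < s b).
    by move=> a b; move/forallP: H2 => /(_ a) /forallP /(_ b) /eqP.
  have hI : inc I.
    by move/forallP: H1 => H1; rewrite /inc;
      rewrite (implyP (forallP (H1 i0) i1) isT) (implyP (forallP (H1 i1) i2) isT).
  pose V := fun t => pi (I (s^-1 t)%g).
  have hV : inc V by rewrite /inc /V !hiso !permKV.
  have hVs : forall t, V (s t) = pi (I t) by move=> t; rewrite /V permK.
  exists I, V; split => //.
  + by move=> x hx; rewrite -cond_ext; move/forallP: H3 => /(_ x) /implyP; apply.
  + move=> y hy; rewrite -cond_ext -(@sortV n s V hV).
    move/forallP: H4 => /(_ y) /implyP /(_ hy).
    by rewrite (eq_map (fun t => congr1 (fun z : 'I_n => (z : nat).+1) (hVs t))).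
- move=> [P [V [hP hV hPV hX hY]]].
  pose I : {ffun 'I_3 -> 'I_n} := finfun P.
  apply/existsP; exists I.
  have hVs : forall t, pi (I t) = V (bv_sigma p t) by move=> t; rewrite ffunE.
  apply/and4P; split.
  + apply/forallP => a; apply/forallP => b; apply/implyP => hab.
    by rewrite !ffunE -(inc_lt hP).
  + apply/forallP => a; apply/forallP => b.
    by rewrite !hVs -(inc_lt hV).
  + apply/forallP => x; apply/implyP => hx.
    have -> : [seq (I t : nat).+1 | t <- enum 'I_3] =
              [seq (P t : nat).+1 | t <- enum 'I_3] by apply: eq_map => t; rewrite ffunE.
    by rewrite cond_ext hX.
  + apply/forallP => y; apply/implyP => hy.
    rewrite (eq_map (fun t => congr1 (fun z : 'I_n => (z : nat).+1) (hVs t))).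
    by rewrite (@sortV n _ _ hV) cond_ext hY.
Qed.

Lemma occ_inv n (pi : 'S_n) (p : bvpat 3) (P V : 'I_3 -> 'I_n) : Occ pi p P V -> Occ (pi^-1)%g (pat_inv p) V P.
Proof.
case=> hP hV hPV hX hY; split => //= t.
by rewrite -(permKV (bv_sigma p) t) -hPV !permK.
Qed.

Arguments occ_inv {n pi p P V}.

Lemma pat_inv_inv (p : bvpat 3) : pat_inv (pat_inv p) = p.
Proof. by case: p => s X Y; rewrite /pat_inv /= invgK. Qed.

Lemma contains_inv n (pi : 'S_n) (p : bvpat 3) : contains (pi^-1)%g (pat_inv p) = contains pi p.
Proof.
apply/idP/idP.
- move/containsP=> [P [V h]]; apply/containsP; exists V, P.
  by have := occ_inv h; rewrite invgK pat_inv_inv.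
- move/containsP=> [P [V h]]; apply/containsP; exists V, P; exact: occ_inv.
Qed.

Lemma rev_permE k (x : 'I_k) : rev_perm k x = rev_ord x.
Proof. by rewrite /rev_perm permE. Qed.

Lemma rev_rev k : (rev_perm k * rev_perm k = 1)%g.
Proof. by apply/permP => x; rewrite permM !rev_permE rev_ordK perm1. Qed.

Lemma rev0 : rev_ord i0 = i2. Proof. exact: val_inj. Qed.
Lemma rev1 : rev_ord i1 = i1. Proof. exact: val_inj. Qed.
Lemma rev2 : rev_ord i2 = i0. Proof. exact: val_inj. Qed.

Lemma cond4_rev n (f : 'I_3 -> 'I_n) (x : 'I_4) :
  cond4 n (fun t => rev_ord (f (rev_ord t))) (rev_ord x) = cond4 n f x.
Proof.
rewrite /cond4 rev0 rev1 rev2 /=.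
have := ltn_ord (f i0); have := ltn_ord (f i1); have := ltn_ord (f i2).
case: x => [[|[|[|[|m]]]] Hm] //= *; apply/idP/idP; lia.
Qed.

Lemma inc_rev n (f : 'I_3 -> 'I_n) : inc f -> inc (fun t => rev_ord (f (rev_ord t))).
Proof.
rewrite /inc rev0 rev1 rev2 /=.
have := ltn_ord (f i0); have := ltn_ord (f i1); have := ltn_ord (f i2); lia.
Qed.

Lemma occ_rev n (pi : 'S_n) (p : bvpat 3) (P V : 'I_3 -> 'I_n) : Occ pi p P V ->
  Occ (rev_perm n * pi)%g (pat_rev p) (fun t => rev_ord (P (rev_ord t))) V.
Proof.
case=> hP hV hPV hX hY; split => //=.
- exact: inc_rev.
- by move=> t; rewrite !permM !rev_permE rev_ordK hPV.
- move=> x /imsetP [x0 hx0 ->]; rewrite cond4_rev; exact: hX.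
Qed.

Arguments occ_rev {n pi p P V}.

Lemma imset_rev2 k (A : {set 'I_k}) : [set rev_ord x | x in [set rev_ord y | y in A]] = A.
Proof.
apply/setP => x; apply/imsetP/idP.
- by move=> [y /imsetP [z hz ->] ->]; rewrite rev_ordK.
- move=> hx; exists (rev_ord x); last by rewrite rev_ordK.
  by apply/imsetP; exists x.
Qed.

Lemma pat_rev_rev (p : bvpat 3) : pat_rev (pat_rev p) = p.
Proof.
case: p => s X Y; rewrite /pat_rev /= imset_rev2 mulgA rev_rev mul1g //.
Qed.

Lemma contains_rev n (pi : 'S_n) (p : bvpat 3) : contains (rev_perm n * pi)%g (pat_rev p) = contains pi p.
Proof.
apply/idP/idP.
- move/containsP=> [P [V h]]; apply/containsP.
  exists (fun t => rev_ord (P (rev_ord t))), V.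
  by have := occ_rev h; rewrite pat_rev_rev mulgA rev_rev mul1g.
- move/containsP=> [P [V h]]; apply/containsP.
  exists (fun t => rev_ord (P (rev_ord t))), V; exact: occ_rev.
Qed.

Lemma pat_comp_eq (p : bvpat 3) : pat_comp p = pat_inv (pat_rev (pat_inv p)).
Proof.
case: p => s X Y; rewrite /pat_comp /pat_inv /pat_rev /= invMg invgK.
suff -> : ((rev_perm 3)^-1 = rev_perm 3)%g by [].
by apply/eqP; rewrite eq_invg_mul rev_rev.
Qed.

Lemma avoid_inv n (p : bvpat 3) : avoid_count n (pat_inv p) = avoid_count n p.
Proof.
rewrite /avoid_count.
have -> : [set pi : 'S_n | ~~ contains pi (pat_inv p)] =
          (fun x : 'S_n => x^-1)%g @^-1: [set pi : 'S_n | ~~ contains pi p].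
  by apply/setP => pi; rewrite !inE -[in RHS]contains_inv invgK.
exact: card_preimset invg_inj.
Qed.

Lemma avoid_rev n (p : bvpat 3) : avoid_count n (pat_rev p) = avoid_count n p.
Proof.
rewrite /avoid_count.
have -> : [set pi : 'S_n | ~~ contains pi (pat_rev p)] =
          (mulg (rev_perm n)) @^-1: [set pi : 'S_n | ~~ contains pi p].
  by apply/setP => pi; rewrite !inE -[in RHS]contains_rev mulgA rev_rev mul1g.
exact: card_preimset (mulgI _).
Qed.

Lemma avoid_sym n (p0 p : bvpat 3) : sym_class p0 p -> avoid_count n p = avoid_count n p0.
Proof.
elim=> //= q _ IH.
- by rewrite avoid_inv.
- by rewrite avoid_rev.
- by rewrite pat_comp_eq avoid_inv avoid_rev avoid_inv.
Qed.

Lemma fiber n (S : {set 'S_n}) (w : 'I_n) (F : {set 'I_n}) :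
  (forall pi, pi \in S -> pi w \notin F) ->
  (forall pi z z', pi \in S -> z \notin F -> z' \notin F -> (pi * tperm z z')%g \in S) ->
  forall z, z \notin F -> #|[set pi in S | pi w == z]| * #|~: F| = #|S|.
Proof.
move=> hF hS.
have eqc : forall z z', z \notin F -> z' \notin F ->
    #|[set pi in S | pi w == z]| <= #|[set pi in S | pi w == z']|.
  move=> z z' hz hz'; rewrite -(card_imset _ (mulIg (tperm z z'))).
  apply: subset_leq_card; apply/subsetP => x /imsetP [y].
  by rewrite inE => /andP [hy /eqP hyw] ->; rewrite inE hS // permM hyw tpermL eqxx.
move=> z hz.
have -> : #|S| = \sum_(z0 in ~: F) #|[set pi in S | pi w == z0]|.
  rewrite -sum1_card (partition_big (fun pi : 'S_n => pi w) (fun z0 => z0 \in ~: F)) /=.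
  - apply: eq_bigr => z0 _; rewrite -sum1_card; apply: eq_bigl => x; by rewrite inE.
  - by move=> pi hpi; rewrite inE hF.
rewrite (eq_bigr (fun _ => #|[set pi in S | pi w == z]|)); last first.
  move=> z0; rewrite inE => hz0; apply/eqP; rewrite eqn_leq !eqc //.
by rewrite sum_nat_const mulnC.
Qed.

Lemma F1 n (u z : 'I_n) : #|[set pi : 'S_n | pi u == z]| = (n.-1)`!.
Proof.
have h1 : forall pi : 'S_n, pi \in setT -> pi u \notin set0 by move=> *; rewrite inE.
have h2 : forall (pi : 'S_n) z z', pi \in setT -> z \notin set0 -> z' \notin set0 ->
   (pi * tperm z z')%g \in setT by move=> *; rewrite inE.
have := @fiber n setT u set0 h1 h2 z (negbT (in_set0 z)); clear h1 h2.
rewrite setC0 cardsT card_ord cardsT card_Sn.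
have -> : [set pi in [set: 'S_n] | pi u == z] = [set pi : 'S_n | pi u == z].
  by apply/setP => pi; rewrite !inE.
case: n u z => [[] //|m u z]; rewrite factS /= mulnC => /eqP.
by rewrite eqn_pmul2l // => /eqP.
Qed.

Lemma F2 n (u v i j : 'I_n) : u != v -> i != j ->
  #|[set pi : 'S_n | (pi u == i) && (pi v == j)]| = (n.-2)`!.
Proof.
move=> huv hij.
have := @fiber n [set pi : 'S_n | pi u == i] v [set i].
have hF : forall pi : 'S_n, pi \in [set pi : 'S_n | pi u == i] -> pi v \notin [set i].
  move=> pi; rewrite !inE => /eqP <-; rewrite (inj_eq perm_inj); by rewrite eq_sym.
have hS : forall (pi : 'S_n) z z', pi \in [set pi : 'S_n | pi u == i] -> z \notin [set i] ->
     z' \notin [set i] -> (pi * tperm z z')%g \in [set pi : 'S_n | pi u == i].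
  move=> pi z z'; rewrite !inE => /eqP hi hz hz'.
  by rewrite permM hi tpermD // eq_sym.
move=> /(_ hF hS j); rewrite inE eq_sym => /(_ hij); clear hF hS.
rewrite cardsC1 card_ord F1.
have -> : [set pi in [set pi : 'S_n | pi u == i] | pi v == j] =
          [set pi : 'S_n | (pi u == i) && (pi v == j)].
  by apply/setP => pi; rewrite !inE.
case: n u v i j huv hij => [[] //|[|m] u v i j huv hij].
  by move: u v huv; case=> [[]] // ? [[]].
rewrite factS /= mulnC => /eqP.
by rewrite eqn_pmul2l // => /eqP.
Qed.

Lemma adjF n (u v : 'I_n) : u != v ->
  #|[set pi : 'S_n | (pi v : nat) == (pi u).+1]| = (n.-1)`!.
Proof.
move=> huv.
rewrite -sum1_card (partition_big (fun pi : 'S_n => pi u) xpredT) //=.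
rewrite (eq_bigr (fun i : 'I_n => if i.+1 < n then (n.-2)`! else 0)); last first.
  move=> i _; case: ifP => hi.
  - rewrite -(@F2 _ u v i (Ordinal hi) huv); last first.
      by rewrite -(inj_eq val_inj) /=; lia.
    rewrite -sum1_card; apply: eq_bigl => pi; rewrite !inE.
    case: (pi u =P i) => [->|_]; last by rewrite andbF.
    by rewrite andbT -(inj_eq val_inj).
  - rewrite sum1dep_card (_ : [set _ | _] = set0) ?cards0 //.
    apply/setP => pi; rewrite !inE.
    case: (pi u =P i) => [->|_]; last by rewrite andbF.
    rewrite andbT; apply/negbTE; have := ltn_ord (pi v); lia.
case: n u v huv => [[] //|m u v huv].
rewrite big_ord_recr /= ltnn addn0.
rewrite (eq_bigr (fun _ => m.-1`!)); last by move=> i _; rewrite ltnS ltn_ord.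
rewrite sum_nat_const card_ord.
case: m u v huv => [|m] u v huv.
  by move: u v huv; case=> [[]] // ? [[]].
by rewrite factS.
Qed.

Lemma half n (PA PB : pred 'S_n) (f : 'S_n -> 'S_n) : injective f ->
  (forall pi, PA pi -> PB (f pi)) -> (forall pi, PB pi -> PA (f pi)) ->
  (forall pi, ~~ (PA pi && PB pi)) ->
  #|[set pi | PA pi || PB pi]| = 2 * #|[set pi | PA pi]|.
Proof.
move=> hf hAB hBA hdis.
have le1 : #|[set pi | PA pi]| <= #|[set pi | PB pi]|.
  rewrite -(card_imset _ hf); apply: subset_leq_card; apply/subsetP => x /imsetP [y].
  by rewrite !inE => hy ->; apply: hAB.
have le2 : #|[set pi | PB pi]| <= #|[set pi | PA pi]|.
  rewrite -(card_imset _ hf); apply: subset_leq_card; apply/subsetP => x /imsetP [y].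
  by rewrite !inE => hy ->; apply: hBA.
have -> : [set pi | PA pi || PB pi] = [set pi | PA pi] :|: [set pi | PB pi].
  by apply/setP => pi; rewrite !inE.
rewrite cardsU.
have -> : [set pi | PA pi] :&: [set pi | PB pi] = set0.
  by apply/setP => pi; rewrite !inE; apply/negbTE.
rewrite cards0 subn0.
have -> : #|[set pi | PB pi]| = #|[set pi | PA pi]| by apply/eqP; rewrite eqn_leq le1 le2.
by rewrite addnn mul2n.
Qed.

Lemma nq n (pi : 'S_n) (x y : 'I_n) : x != y -> (pi x : nat) != pi y.
Proof. by move=> h; rewrite (inj_eq val_inj) (inj_eq perm_inj). Qed.

Arguments nq {n} pi {x y}.

Lemma fixhalf n (u v w z : 'I_n) : u != v -> v != w -> u != w ->
  2 * #|[set pi : 'S_n | (pi u == z) && (pi v < pi w)]| = (n.-1)`!.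
Proof.
move=> huv hvw huw.
have hf : injective (mulg (tperm v w)) by exact: mulgI.
have H := @half n (fun pi => (pi u == z) && (pi v < pi w))
   (fun pi => (pi u == z) && (pi w < pi v)) _ hf.
rewrite -H.
- rewrite -(F1 _ u z); apply: eq_card => pi; rewrite !inE.
  case: (pi u =P z) => //= hz; have := nq pi hvw; lia.
- move=> pi; rewrite !permM tpermL tpermR tpermD 1?eq_sym //.
- move=> pi; rewrite !permM tpermL tpermR tpermD 1?eq_sym //.
- move=> pi; apply/negP => /andP [/andP [_ h1] /andP [_ h2]]; lia.
Qed.

Lemma adjhalf n (u v w : 'I_n) : u != v -> v != w -> u != w ->
  2 * #|[set pi : 'S_n | ((pi v : nat) == (pi u).+1) && (pi v < pi w)]| = (n.-1)`! /\
  2 * #|[set pi : 'S_n | ((pi v : nat) == (pi u).+1) && (pi w < pi u)]| = (n.-1)`!.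
Proof.
move=> huv hvw huw.
pose f := fun pi : 'S_n => (tperm u v * pi * rev_perm n)%g.
have hf : injective f by move=> x y; rewrite /f => /mulIg /mulgI.
have fE : forall pi x, (f pi x : nat) = n - (pi (tperm u v x)).+1.
  by move=> pi x; rewrite /f !permM rev_permE.
pose PA := fun pi : 'S_n => ((pi v : nat) == (pi u).+1) && (pi v < pi w).
pose PB := fun pi : 'S_n => ((pi v : nat) == (pi u).+1) && (pi w < pi u).
have hAB : forall pi, PA pi -> PB (f pi).
  move=> pi; rewrite /PA /PB !fE tpermL tpermR tpermD // 1?eq_sym //.
  have := ltn_ord (pi u); have := ltn_ord (pi v); have := ltn_ord (pi w); lia.
have hBA : forall pi, PB pi -> PA (f pi).
  move=> pi; rewrite /PA /PB !fE tpermL tpermR tpermD // 1?eq_sym //.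
  have := ltn_ord (pi u); have := ltn_ord (pi v); have := ltn_ord (pi w); lia.
have hdis : forall pi, ~~ (PA pi && PB pi).
  by move=> pi; rewrite /PA /PB; apply/negP; lia.
have hdis' : forall pi, ~~ (PB pi && PA pi) by move=> pi; rewrite andbC.
have eS : forall (P Q : pred 'S_n), (P =1 PA) -> (Q =1 PB) ->
    [set pi | P pi || Q pi] = [set pi : 'S_n | (pi v : nat) == (pi u).+1].
  move=> P Q hP hQ; apply/setP => pi; rewrite !inE hP hQ /PA /PB.
  have := nq pi hvw; have := nq pi huw; lia.
split.
- have := @half n PA PB f hf hAB hBA hdis; rewrite (eS PA PB) // adjF //.
- have := @half n PB PA f hf hBA hAB hdis'; rewrite (_ : [set pi | PB pi || PA pi] = [set pi | PA pi || PB pi]).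
    by rewrite (eS PA PB) // adjF.
  by apply/setP => pi; rewrite !inE orbC.
Qed.

Definition Qv n (a b c m : nat) : bool := (a < b) && (b < c) && cond4v n a b c m.

Lemma countQ n (u v w : 'I_n) (m : nat) : u != v -> v != w -> u != w ->
  2 * #|[set pi : 'S_n | Qv n (pi u) (pi v) (pi w) m]| = (n.-1)`!.
Proof.
move=> huv hvw huw.
have n0 : 0 < n by have := ltn_ord u; lia.
have n1 : n.-1 < n by lia.
have hwu : w != u by rewrite eq_sym.
have hwv : w != v by rewrite eq_sym.
have hvu : v != u by rewrite eq_sym.
case: m => [|[|[|m]]].
- rewrite -(@fixhalf n u v w (Ordinal n0) huv hvw huw); congr (2 * _).
  apply: eq_card => pi; rewrite !inE /Qv /= -(inj_eq val_inj) /=.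
  have := nq pi huv; have := nq pi hvw; have := nq pi huw; lia.
- rewrite -(@adjhalf n u v w huv hvw huw).1; congr (2 * _).
  apply: eq_card => pi; rewrite !inE /Qv /=.
  have := nq pi huv; have := nq pi hvw; have := nq pi huw; lia.
- rewrite -(@adjhalf n v w u hvw hwu hvu).2; congr (2 * _).
  apply: eq_card => pi; rewrite !inE /Qv /=.
  have := nq pi huv; have := nq pi hvw; have := nq pi huw; lia.
- rewrite -(@fixhalf n w u v (Ordinal n1) hwu huv hwv); congr (2 * _).
  apply: eq_card => pi; rewrite !inE /Qv /= -(inj_eq val_inj) /=.
  rewrite -subn1; have := nq pi huv; have := nq pi hvw; have := nq pi huw; have := ltn_ord (pi w); have := ltn_ord (pi v); lia.
Qed.

Lemma contains_forced n (pi : 'S_n) (p : bvpat 3) (x : 'I_4) (V0 : 'I_3 -> 'I_n) :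
  bv_X p = [set x] -> inc V0 ->
  (forall y, y \in bv_Y p -> cond4 n V0 y) ->
  (forall V, inc V -> (forall y, y \in bv_Y p -> cond4 n V y) -> forall t, V t = V0 t) ->
  contains pi p = Qv n ((pi^-1)%g (V0 (bv_sigma p i0))) ((pi^-1)%g (V0 (bv_sigma p i1)))
                      ((pi^-1)%g (V0 (bv_sigma p i2))) x.
Proof.
move=> hX hV0 hY0 hforce; apply/idP/idP.
- move/containsP => [P [V [hP hV hPV hXP hYV]]].
  have eV := hforce V hV hYV.
  have eP : forall t, P t = (pi^-1)%g (V0 (bv_sigma p t)).
    by move=> t; rewrite -eV -hPV permK.
  rewrite -!eP /Qv.
  have := hXP x; rewrite hX set11 => /(_ isT); rewrite /cond4 => ->.
  by move: hP; rewrite /inc => ->.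
- move=> hQ; apply/containsP; exists (fun t => (pi^-1)%g (V0 (bv_sigma p t))), V0.
  move: hQ; rewrite /Qv => /andP [hinc hc]; split => //.
  + by move=> t; rewrite permKV.
  + by move=> y; rewrite hX => /set1P ->.
Qed.

Definition mkV m (a b c : nat) : 'I_3 -> 'I_(m.+3) :=
  fun t => inord (nth c [:: a; b; c] t).

Lemma s3P n (V : 'I_3 -> 'I_n) l : all (fun k => k < 4) l ->
  (forall y : 'I_4, y \in s3 l -> cond4 n V y) <->
  (forall k, k \in l -> cond4v n (V i0) (V i1) (V i2) k).
Proof.
move=> hl; split.
- move=> h k hk; have hk4 := allP hl k hk.
  by have := h (Ordinal hk4); rewrite inE /=; apply.
- by move=> h y; rewrite inE => hy; apply: h.
Qed.

Lemma inc_inj n (f : 'I_3 -> 'I_n) : inc f -> injective f.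
Proof.
move=> hf s t e.
case: (ltngtP s t) => h.
- by have := inc_lt hf s t; rewrite h e ltnn.
- by have := inc_lt hf t s; rewrite h e ltnn.
- exact: val_inj.
Qed.

Lemma base_std m (p : bvpat 3) (x : 'I_4) (l : seq nat) (a b c : nat) :
  bv_X p = [set x] -> bv_Y p = s3 l -> all (fun k => k < 4) l ->
  a < b -> b < c -> c < m.+3 ->
  (forall va vb vc : nat, va < vb -> vb < vc -> vc < m.+3 ->
     all (cond4v m.+3 va vb vc) l = [&& va == a, vb == b & vc == c]) ->
  2 * #|[set pi : 'S_(m.+3) | contains pi p]| = (m.+2)`!.
Proof.
move=> hX hY hl hab hbc hc hall.
set V0 := mkV m a b c.
have vE : [/\ (V0 i0 : nat) = a, (V0 i1 : nat) = b & (V0 i2 : nat) = c].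
  by rewrite /V0 /mkV /= !inordK //; lia.
case: vE => v0 v1 v2.
have hV0 : inc V0 by rewrite /inc v0 v1 v2; lia.
have hY0 : forall y, y \in bv_Y p -> cond4 _ V0 y.
  rewrite hY; apply/(@s3P _ _ _ hl); apply/allP; rewrite hall ?v0 ?v1 ?v2 ?eqxx //; lia.
have hforce : forall V, inc V -> (forall y, y \in bv_Y p -> cond4 _ V y) ->
    forall t, V t = V0 t.
  move=> V hV; rewrite hY => /(@s3P _ _ _ hl) /allP; rewrite hall; last first.
  - exact: ltn_ord.
  - by move: hV; rewrite /inc => /andP [].
  - by move: hV; rewrite /inc => /andP [].
  case/and3P => /eqP e0 /eqP e1 /eqP e2 t; apply: ord_inj.
  by case: (ord3P t) => [->|[->|->]]; rewrite ?e0 ?e1 ?e2 ?v0 ?v1 ?v2.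
set s := bv_sigma p.
have dist : forall t t', t != t' -> V0 (s t) != V0 (s t').
  by move=> t t' h; rewrite (inj_eq (@inc_inj _ _ hV0)) (inj_eq perm_inj).
rewrite -(@countQ _ (V0 (s i0)) (V0 (s i1)) (V0 (s i2)) x) ?dist //.
congr (2 * _).
rewrite -(card_preimset _ (@invg_inj _ : injective (fun q : 'S_(m.+3) => q^-1)%g)).
apply: eq_card => pi; rewrite !inE.
by rewrite (@contains_forced _ (pi^-1)%g p x V0 hX hV0 hY0 hforce) invgK.
Qed.

Lemma std_all m k l (p : bvpat 3) : bv_X p = s3 [:: k] -> bv_Y p = s3 l -> k < 4 ->
  l \in [:: [::0;1;2]; [::0;1;3]; [::0;2;3]; [::1;2;3]] ->
  2 * #|[set pi : 'S_(m.+3) | contains pi p]| = (m.+2)`!.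
Proof.
move=> hX hY hk.
have hX' : bv_X p = [set Ordinal hk].
  by rewrite hX; apply/setP => y; rewrite /s3 !inE -(inj_eq val_inj).
rewrite !inE => /or4P [] /eqP el; rewrite el in hY.
- apply: (@base_std m p _ _ 0 1 2 hX' hY) => //.
  by move=> va vb vc h1 h2 h3 /=; apply/idP/idP; lia.
- apply: (@base_std m p _ _ 0 1 m.+2 hX' hY) => //.
  by move=> va vb vc h1 h2 h3 /=; apply/idP/idP; lia.
- apply: (@base_std m p _ _ 0 m.+1 m.+2 hX' hY) => //.
  by move=> va vb vc h1 h2 h3 /=; apply/idP/idP; lia.
- apply: (@base_std m p _ _ m m.+1 m.+2 hX' hY) => //.
  by move=> va vb vc h1 h2 h3 /=; apply/idP/idP; lia.
Qed.

Lemma avoid_from n (p : bvpat 3) :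
  2 * #|[set pi : 'S_n | contains pi p]| = (n.-1)`! ->
  ((avoid_count n p)%:R = (n`!)%:R - ((n.-1)`!)%:R / 2 :> rat)%R.
Proof.
move=> h.
have e : avoid_count n p + #|[set pi : 'S_n | contains pi p]| = n`!.
  rewrite /avoid_count -card_Sn -(cardsC [set pi : 'S_n | contains pi p]) addnC.
  congr (_ + _); apply: eq_card => pi; by rewrite !inE.
rewrite -e -h natrD natrM.
set K := (#|_|%:R : rat).
rewrite [X in (_ - X)%R]mulrC mulrA mulVf ?mul1r ?addrK //.
Qed.

Theorem mainTheorem18 (p0 p : bvpat 3) (n : nat) :
  listed p0 -> sym_class p0 p -> 3 <= n ->
  ((avoid_count n p)%:R = (n`!)%:R - ((n.-1)`!)%:R / 2 :> rat)%R.
Proof.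
move=> hl hsym hn; rewrite (@avoid_sym n p0 p hsym).
case: n hn => [|[|[|m]]] // _.
move: hl => [i hi ->].
do 24 (case: i hi => [_|i hi]; [first
  [ apply: avoid_from; rewrite /base_patterns /=; eapply std_all; [reflexivity|reflexivity|done|done]
  | rewrite -avoid_inv; apply: avoid_from; rewrite /base_patterns /=; eapply std_all; [reflexivity|reflexivity|done|done]] | ]).
by [].
Qed.
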